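(* The number of components of the closure $\widehat{\mathbb{L}}(p_1,q_1;\dots;p_r,q_r)$ of a Lorenz braid equals the multiplicity of $1$ as an eigenvalue (root of the characteristic polynomial) of the $(P_r+Q_r)\times(P_r+Q_r)$ permutation matrix $M$ defined as follows: index the rows by consecutive blocks of sizes $q_1,\dots,q_r,p_1,\dots,p_r$ and the columns by consecutive blocks of sizes $p_1,q_1,p_2,q_2,\dots,p_r,q_r$; for each $i$, the block of $M$ in row block $q_i$ and column block $q_i$ is $I_{q_i}$, the block in row block $p_i$ and column block $p_i$ is $I_{p_i}$, and all other blocks are zero. (This matrix $M$ equals $\lim_{t\to1}\beta_{P_r+Q_r}(\mathbb{L}(p_1,q_1;\dots;p_r,q_r))$.)
   Context: Lorenz braid: given $r\ge1$ and positive integers $p_1,q_1,\dots,p_r,q_r$, set $P_j=p_1+\cdots+p_j$, $Q_j=q_1+\cdots+q_j$. $\mathbb{L}(p_1,q_1;\dots;p_r,q_r)$ is the braid on $P_r+Q_r$ strands defined by: the top row is split into a left part of $Q_r$ points and a right part of $P_r$ points; the bottom row is split, from left to right, into consecutive parts of sizes $p_1,q_1,\dots,p_r,q_r$; the strands from the left top part are joined in order to the points of the parts of sizes $q_1,\dots,q_r$, and the strands from the right top part are joined in order to the points of the parts of sizes $p_1,\dots,p_r$; at each crossing the strand from the left top part passes over. Its closure (joining the $i$-th top point to the $i$-th bottom point for each $i$) is a Lorenz link. $\beta_n$ denotes the Burau representation $B_n\to\mathrm{GL}_n(\mathbb{Z}[t,t^{-1}])$, $\beta_n(\sigma_j)=I_{j-1}\oplus\begin{pmatrix}1-t&t\\1&0\end{pmatrix}\oplus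 I_{n-j-1}$. *)

(* Defs.v *)
From HB Require Import structures.
From mathcomp Require Import all_boot all_order all_algebra.
Set Implicit Arguments. Unset Strict Implicit. Unset Printing Implicit Defensive.
Import Order.TTheory GRing.Theory Num.Theory.

(* Parameters of a Lorenz braid L(p_1,q_1;...;p_r,q_r): the pairs (p_i,q_i)
   are (p (i-1), q (i-1)) for i = 1..r, i.e. indices 0 <= l < r. *)

Definition Psum (p : nat -> nat) (j : nat) : nat := \sum_(l < j) p l.
Definition Qsum (q : nat -> nat) (j : nat) : nat := \sum_(l < j) q l.

Definition lorenz_n (r : nat) (p q : nat -> nat) : nat := Psum p r + Qsum q r.

(* Bottom row, split from left to right into consecutive parts of sizes
   p_1,q_1,...,p_r,q_r (0-based positions). *)
Definition bot_pstart (p q : nat -> nat) (l : nat) : nat := \sum_(m < l) (p m + q m).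
Definition bot_qstart (p q : nat -> nat) (l : nat) : nat := bot_pstart p q l + p l.

Definition bot_qpoints (r : nat) (p q : nat -> nat) : seq nat :=
  flatten [seq [seq bot_qstart p q l + k | k <- iota 0 (q l)] | l <- iota 0 r].
Definition bot_ppoints (r : nat) (p q : nat -> nat) : seq nat :=
  flatten [seq [seq bot_pstart p q l + k | k <- iota 0 (p l)] | l <- iota 0 r].

(* Strand map of the Lorenz braid: the strand starting at top point x
   (0-based) ends at bottom point lorenz_strand r p q x.  The top row is a
   left part of Q_r points followed by a right part of P_r points; the left
   strands go in order to the q-parts, the right strands in order to the
   p-parts. *)
Definition lorenz_strand (r : nat) (p q : nat -> nat) (x : nat) : nat :=
  if x < Qsum q r then nth 0 (bot_qpoints r p q) x
  else nth 0 (bot_ppoints r p q) (x - Qsum q r).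

(* Closure: bottom point i is joined to top point i, so following a component
   of the closed braid amounts to iterating the strand map on 'I_n. *)
Definition closure_step (r : nat) (p q : nat -> nat) (x : 'I_(lorenz_n r p q))
  : 'I_(lorenz_n r p q) := insubd x (lorenz_strand r p q x).

Definition lorenz_link_components (r : nat) (p q : nat -> nat) : nat :=
  #|[set [set y : 'I_(lorenz_n r p q) | fconnect (@closure_step r p q) x y] | x : 'I_(lorenz_n r p q)]|.

Definition row_qstart (q : nat -> nat) (l : nat) : nat := Qsum q l.
Definition row_pstart (r : nat) (p q : nat -> nat) (l : nat) : nat :=
  Qsum q r + Psum p l.

Definition lorenz_M (r : nat) (p q : nat -> nat) : 'M[rat]_(lorenz_n r p q) :=
  \matrix_(i, j)
    (if [exists l : 'I_r,
          ((row_qstart q l <= i < row_qstart q l + q l) &&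
           (j == bot_qstart p q l + (i - row_qstart q l) :> nat))
       || ((row_pstart r p q l <= i < row_pstart r p q l + p l) &&
           (j == bot_pstart p q l + (i - row_pstart r p q l) :> nat))]
     then 1%R else 0%R).

(* Main.v *)
Require Import Defs.
From HB Require Import structures.
From mathcomp Require Import all_boot all_order all_algebra.
Import Order.TTheory GRing.Theory Num.Theory.
From mathcomp Require Import fingroup perm zify.

Module LorenzAux.
Set Implicit Arguments. Unset Strict Implicit. Unset Printing Implicit Defensive.

Section D.
Variable c : nat -> nat.
Local Notation D j := (\sum_(m < j) c m).

Lemma D_S j : D j.+1 = D j + c j.
Proof. by rewrite big_ord_recr. Qed.

Lemma D_mono l l' : l <= l' -> D l <= D l'.
Proof.
move=> h; rewrite -(subnK h); elim: (l' - l) => [|t IH]; rewrite ?add0n // addSn D_S.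
exact: leq_trans IH (leq_addr _ _).
Qed.

Lemma D_uniq l l' k k' : k < c l -> k' < c l' -> D l + k = D l' + k' ->
  l = l' /\ k = k'.
Proof.
move=> kl kl' e; case: (ltngtP l l') => h.
- have := D_mono h; rewrite D_S; lia.
- have := D_mono h; rewrite D_S; lia.
- by subst; split => //; lia.
Qed.

Lemma D_ex r i : i < D r -> exists l k, [/\ l < r, k < c l & i = D l + k].
Proof.
elim: r => [|r IH]; first by rewrite big_ord0.
rewrite D_S => h; case: (ltnP i (D r)) => h2.
  by have [l [k [lr kl ->]]] := IH h2; exists l, k; split => //; lia.
by exists r, (i - D r); split => //; lia.
Qed.

Variable a : nat -> nat.
Local Notation fl r := (flatten [seq [seq a l + k | k <- iota 0 (c l)] | l <- iota 0 r]).

Lemma size_fl r : size (fl r) = D r.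
Proof.
elim: r => [|r IH]; first by rewrite big_ord0.
by rewrite -addn1 iotaD map_cat flatten_cat size_cat IH /= cats0 size_map size_iota addn1 D_S.
Qed.

Lemma nth_fl r l k : l < r -> k < c l -> nth 0 (fl r) (D l + k) = a l + k.
Proof.
elim: r => [//|r IH] lr kl.
rewrite -addn1 iotaD map_cat flatten_cat nth_cat size_fl /= cats0.
case: (ltngtP l r) kl => [lr' kl|rl kl|-> kl]; last 2 first.
- lia.
- by rewrite ltnNge leq_addr /= addKn add0n (nth_map 0) ?size_iota ?nth_iota.
have := D_mono lr'; rewrite D_S => h.
rewrite ifT; first exact: IH.
by apply: leq_trans h; rewrite ltn_add2l.
Qed.
End D.


Section L.
Variables (r : nat) (p q : nat -> nat).
Definition dd j := if odd j then q j./2 else p j./2.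

Lemma Dd_even l : \sum_(m < l.*2) dd m = bot_pstart p q l.
Proof.
elim: l => [|l IH]; first by rewrite /bot_pstart !big_ord0.
rewrite doubleS !(D_S dd) IH /bot_pstart (D_S (fun m => p m + q m)).
by rewrite /dd /= odd_double /= doubleK uphalf_double addnA.
Qed.

Lemma Dd_odd l : \sum_(m < l.*2.+1) dd m = bot_qstart p q l.
Proof. by rewrite (D_S dd) Dd_even /dd odd_double doubleK. Qed.

Lemma Dd_all : \sum_(m < r.*2) dd m = lorenz_n r p q.
Proof. by rewrite Dd_even /bot_pstart big_split /lorenz_n. Qed.

Lemma strandQ l k : l < r -> k < q l ->
  lorenz_strand r p q (Qsum q l + k) = bot_qstart p q l + k.
Proof.
move=> lr kl; rewrite /lorenz_strand ifT; last first.
  have := D_mono q lr; rewrite (D_S q) /Qsum; lia.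
exact: (@nth_fl q (bot_qstart p q)).
Qed.

Lemma strandP l k : l < r -> k < p l ->
  lorenz_strand r p q (Qsum q r + Psum p l + k) = bot_pstart p q l + k.
Proof.
move=> lr kl; rewrite /lorenz_strand ifF; last by lia.
rewrite -addnA addKn.
exact: (@nth_fl p (bot_pstart p q)).
Qed.

Lemma decomp x : x < lorenz_n r p q ->
  (exists l k, [/\ l < r, k < q l & x = Qsum q l + k]) \/
  (exists l k, [/\ l < r, k < p l & x = Qsum q r + Psum p l + k]).
Proof.
rewrite /lorenz_n => xn; case: (ltnP x (Qsum q r)) => h.
  by left; apply: D_ex.
right; have : x - Qsum q r < Psum p r by lia.
move/D_ex => [l [k [lr kl e]]]; exists l, k; split => //.
rewrite /Psum /Qsum in e h *; lia.
Qed.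

Lemma strand_dd x : x < lorenz_n r p q -> exists j k,
  [/\ j < r.*2, k < dd j & lorenz_strand r p q x = \sum_(m < j) dd m + k].
Proof.
move/decomp => [[l [k [lr kl ->]]]|[l [k [lr kl ->]]]].
  exists l.*2.+1, k; rewrite strandQ // Dd_odd /dd /= odd_double /= uphalf_double.
  by split => //; rewrite ltn_Sdouble.
exists l.*2, k; rewrite strandP // Dd_even /dd odd_double /= doubleK.
by split => //; rewrite ltn_double.
Qed.

Lemma strand_lt x : x < lorenz_n r p q -> lorenz_strand r p q x < lorenz_n r p q.
Proof.
move/strand_dd => [j [k [jr kj ->]]].
have := D_mono dd jr; rewrite (D_S dd) Dd_all; lia.
Qed.

Lemma strand_inj x1 x2 : x1 < lorenz_n r p q -> x2 < lorenz_n r p q ->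
  lorenz_strand r p q x1 = lorenz_strand r p q x2 -> x1 = x2.
Proof.
move=> /decomp [[l1 [k1 [lr1 kl1 ->]]]|[l1 [k1 [lr1 kl1 ->]]]]
       /decomp [[l2 [k2 [lr2 kl2 ->]]]|[l2 [k2 [lr2 kl2 ->]]]];
  rewrite ?strandQ ?strandP // -?Dd_odd -?Dd_even => /D_uniq.
- rewrite /dd /= !odd_double /= !uphalf_double => /(_ kl1 kl2) [e1 ->].
  by have -> : l1 = l2 by lia.
- rewrite /dd /= !odd_double /= uphalf_double doubleK => /(_ kl1 kl2) [e1 _]; lia.
- rewrite /dd /= !odd_double /= uphalf_double doubleK => /(_ kl1 kl2) [e1 _]; lia.
- rewrite /dd /= !odd_double /= !doubleK => /(_ kl1 kl2) [e1 ->].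
  by have -> : l1 = l2 by lia.
Qed.
End L.

Section RingPart.
Local Open Scope ring_scope.

Lemma det_mxsub_perm (R : comNzRingType) n (f : 'I_n -> 'I_n) (B : 'M[R]_n) :
  injective f -> \det (mxsub f f B) = \det B.
Proof.
move=> finj; set s := perm finj.
have -> : mxsub f f B = perm_mx s *m B *m perm_mx s^-1.
  by rewrite -row_permE -col_permE; apply/matrixP=> i j; rewrite !mxE ?invgK ?permE; by [].
rewrite !det_mulmx mulrC mulrA -det_mulmx -perm_mxM mulVg perm_mx1 det1 mul1r.
done.
Qed.

Lemma char_poly_mxsub (R : comNzRingType) m n (f : 'I_m -> 'I_n) (A : 'M[R]_n) :
  injective f -> m = n -> char_poly (mxsub f f A) = char_poly A.
Proof.
move=> finj e; subst m; rewrite /char_poly -(det_mxsub_perm (char_poly_mx A) finj).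
congr (\det _); apply/matrixP=> i j; rewrite !mxE (inj_eq finj) //.
Qed.

Lemma char_poly_block (R : comNzRingType) m n (A : 'M[R]_m) (D : 'M[R]_n) :
  char_poly (block_mx A 0 0 D) = char_poly A * char_poly D.
Proof.
rewrite /char_poly /char_poly_mx -(det_ublock _ 0); congr (\det _).
rewrite scalar_mx_block map_block_mx !map_mx0 opp_block_mx add_block_mx.
by rewrite !oppr0 !addr0.
Qed.
Definition cyc_mx (R : nzRingType) k : 'M[R]_k :=
  \matrix_(i, j) ((j == (i.+1 %% k)%N :> nat)%:R).

Lemma eq_mod_false a b n : (0 < a)%N -> (a < n)%N -> (b <= n)%N -> a != b ->
  (a == b %% n)%N = false.
Proof.
move=> a0 an bn ab; case: (ltngtP b n) bn => // [bn _|-> _].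
  by rewrite modn_small // (negbTE ab).
by rewrite modnn gtn_eqF.
Qed.

Lemma char_poly_cyc (R : comNzRingType) k : (0 < k)%N ->
  char_poly (cyc_mx R k) = 'X^k - 1.
Proof.
case: k => [//|[|n]] _.
  rewrite /char_poly det_mx11 !mxE /= mulr1n; by rewrite expr1.
rewrite /char_poly (expand_det_col _ ord0) big_ord_recl big_ord_recr /=.
rewrite big1 ?add0r; last first.
  move=> i _; rewrite !mxE /= /bump /= add1n modn_small ?ltnS //=.
  by rewrite mulr0n polyC0 subr0 mul0r.
rewrite !mxE /= /bump /= add1n modnn /= mulr1n mulr0n polyC0 polyC1 subr0 sub0r.
rewrite /cofactor.
have -> : \det (row' ord0 (col' ord0 (char_poly_mx (cyc_mx R n.+2)))) = 'X^(n.+1).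
  rewrite -det_tr det_trig; last first.
    apply/is_trig_mxP => i j lij; rewrite !mxE -val_eqE /= /bump /= !add1n eqSS (gtn_eqF lij).
    have hi := ltn_ord i; have hj := ltn_ord j; rewrite /= in hi hj.
    rewrite eq_mod_false ?polyC0 ?subr0 // ?eqSS ?ltn_eqF // ?ltnS ?(ltnW lij) //; lia.
  rewrite (eq_bigr (fun=> 'X)) ?prodr_const ?card_ord // => i _.
  have hi := ltn_ord i; rewrite /= in hi.
  rewrite !mxE eqxx /= /bump /= !add1n mulr1n eq_mod_false //; try lia.
  by rewrite polyC0 subr0.
have -> : \det (row' (lift ord0 ord_max) (col' ord0 (char_poly_mx (cyc_mx R n.+2))))
    = (-1) ^+ n.+1.
  rewrite det_trig; last first.
    apply/is_trig_mxP => i j lij; rewrite !mxE -val_eqE /= /bump /=.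
    have hi := ltn_ord i; have hj := ltn_ord j; rewrite /= in hi hj.
    have -> : (1 + n <= i)%N = false by rewrite add1n leqNgt hi.
    rewrite /= add0n !add1n (ltn_eqF (ltn_trans lij (ltnSn _))) mulr0n modn_small; last by rewrite ltnS.
    by rewrite eqSS (gtn_eqF lij) polyC0 subr0.
  rewrite (eq_bigr (fun=> -1)) ?prodr_const ?card_ord // => i _.
  have hi := ltn_ord i; rewrite /= in hi.
  rewrite !mxE -val_eqE /= /bump /=.
  have -> : (1 + n <= i)%N = false by rewrite add1n leqNgt hi.
  rewrite /= add0n !add1n (ltn_eqF (ltnSn _)) mulr0n modn_small ?ltnS //.
  by rewrite eqxx polyC1 sub0r.
rewrite /= add0n expr0 mul1r -exprS.
rewrite /bump /= addn0 add1n -exprD addnn -mul2n exprM sqrrN expr1n expr1n mulr1.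
by [].
Qed.
Lemma mup_Xn1 k : (0 < k)%N -> mup (1 : rat) ('X^k - 1) = 1%N.
Proof.
move=> k0.
have hq : root (\sum_(i < k) ('X : {poly rat}) ^+ i) 1 = false.
  rewrite /root horner_sum (eq_bigr (fun=> 1)); last by move=> i _; rewrite hornerXn expr1n.
  by rewrite sumr_const card_ord pnatr_eq0; case: k k0.
rewrite subrX1 -polyC1 mupM.
- by rewrite -(expr1 ('X - 1%:P)) mup_XsubCX eqxx mupNroot ?hq.
- by rewrite polyXsubC_eq0.
- by apply/eqP => h; move: hq; rewrite h root0.
Qed.
Lemma class_eq (T : finType) (g : T -> T) : injective g -> forall x y,
  ([set z | fconnect g x z] == [set z | fconnect g y z]) = fconnect g y x.
Proof.
move=> ginj x y; apply/eqP/idP => [h|yx].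
  have : x \in [set z | fconnect g y z] by rewrite -h inE connect0.
  by rewrite inE.

apply/setP => z; rewrite !inE; apply/idP/idP => h.
  exact: connect_trans yx h.
by apply: connect_trans h; rewrite fconnect_sym.
Qed.

Lemma card_orbits (T : finType) (g : T -> T) : injective g ->
  (#|[set [set y | fconnect g x y] | x : T]|%:R : rat)
  = \sum_(x : T) (#|[set y | fconnect g x y]|%:R)^-1.
Proof.
move=> ginj.
rewrite (partition_big_imset (fun x => [set y | fconnect g x y])) /=.
rewrite -sum1_card natr_sum; apply: eq_bigr => B /imsetP [y _ ->].
rewrite (eq_bigl (fun x => x \in [set z | fconnect g y z])); last first.
  by move=> x; rewrite class_eq // inE.
rewrite (eq_bigr (fun=> (#|[set z | fconnect g y z]|%:R)^-1)); last first.
  by move=> x; rewrite inE => yx; have /eqP -> : [set z | fconnect g x z] == [set z | fconnect g y z] by rewrite class_eq.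
rewrite sumr_const -[RHS]mulr_natr mulVf // pnatr_eq0 -lt0n card_gt0.
by apply/set0Pn; exists y; rewrite inE connect0.
Qed.


Definition pmx n (g : 'I_n -> 'I_n) : 'M[rat]_n := \matrix_(i, j) ((j == g i)%:R).
Definition ocnt (T : finType) (g : T -> T) : rat :=
  \sum_(x : T) (#|[set y | fconnect g x y]|%:R)^-1.

Lemma main_ind n (g : 'I_n -> 'I_n) : injective g ->
  (mup (1 : rat) (char_poly (pmx g)))%:R = ocnt g.
Proof.
move: g; elim/ltn_ind: n => n IH g ginj.
case: n IH g ginj => [|n'] IH g ginj.
  rewrite /ocnt big_ord0 /char_poly det_mx00 mupNroot //; exact: root1.
set n := n'.+1 in IH g ginj *.
pose x : 'I_n := ord0.
pose S := [set y | fconnect g x y].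
have F1 y : y \in S -> g y \in S.
  by rewrite !inE => h; apply: connect_trans h (fconnect1 _ _).
have F2 y : y \notin S -> g y \notin S.
  apply: contra; rewrite !inE => h; apply: connect_trans h _.
  by rewrite fconnect_sym // fconnect1.
pose k := #|S|.
have hk : k = fingraph.order g x by apply: eq_card => y; rewrite inE.
have k0 : (0 < k)%N by rewrite hk fingraph.order_gt0.
pose m := #|~: S|.
have hkm : (k + m)%N = n by rewrite cardsC card_ord.
pose ev := @enum_val _ (mem (~: S)).
pose g' (b : 'I_m) : 'I_m := enum_rank_in (enum_valP b) (g (enum_val b)).
have F3 b : ev (g' b) = g (ev b).
  rewrite /ev /g' enum_rankK_in //; rewrite inE; apply: F2; rewrite -in_setC.
  exact: (enum_valP b).
have g'inj : injective g'.
  by move=> b1 b2 h; apply: enum_val_inj; apply: ginj; rewrite -!F3 h.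
have F4 t b : ev (iter t g' b) = iter t g (ev b).
  by elim: t => [//|t IHt]; rewrite !iterS F3 IHt.
have F5 a b : (a < k)%N -> (b < k)%N -> (iter a g x == iter b g x) = (a == b).
  move=> ak bk; apply/eqP/eqP => [h|->//].
  by rewrite hk in ak bk; rewrite -(findex_iter ak) -(findex_iter bk) h.
have ko : iter k g x = x by rewrite hk iter_order.
have F6 a : (a < k)%N -> g (iter a g x) = iter (a.+1 %% k) g x.
  move=> ak; rewrite -iterS; have [ak'|ak'] := ltnP a.+1 k.
    by rewrite modn_small.
  have e : a.+1 = k by apply/eqP; rewrite eqn_leq ak ak'.
  by rewrite e modnn ko.
have evS b : ev b \notin S.
  by have := enum_valP b; rewrite inE.
pose f (i : 'I_(k + m)) : 'I_n :=
  match split i with inl a => iter a g x | inr b => ev b end.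
have finj : injective f.
  move=> i1 i2; rewrite -[i1]splitK -[i2]splitK /f !unsplitK.
  case: (split i1) => a1; case: (split i2) => b1 /=.
  - by move/eqP; rewrite F5 // => /eqP /val_inj ->.
  - by move=> h; have := evS b1; rewrite -h inE fconnect_iter.
  - by move=> h; have := evS a1; rewrite h inE fconnect_iter.
  - by move/enum_val_inj ->.
have hblock : mxsub f f (pmx g) = block_mx (cyc_mx rat k) 0 0 (pmx g').
  apply/matrixP => i j; rewrite mxE -[i]splitK -[j]splitK /f !unsplitK.
  case: (split i) => a1; case: (split j) => b1 /=.
  - rewrite block_mxEul !mxE F6 // F5 //; last by rewrite ltn_mod.
  - rewrite block_mxEur !mxE; case: eqP => // h; have := evS b1.
    by rewrite h inE -iterS fconnect_iter.
  - rewrite block_mxEdl !mxE; case: eqP => // h; have := F2 _ (evS a1).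
    by rewrite -h inE fconnect_iter.
  - by rewrite block_mxEdr !mxE -F3 (inj_eq enum_val_inj).
have hcp : char_poly (pmx g) = ('X^k - 1) * char_poly (pmx g').
  by rewrite -(char_poly_mxsub _ finj hkm) hblock char_poly_block char_poly_cyc.
have mn : (m < n)%N by rewrite -hkm -{1}(add0n m) ltn_add2r.
rewrite hcp mupM ?mup_Xn1 //; last 2 first.
- by rewrite -polyC1 monic_neq0 // monicXnsubC.
- exact: monic_neq0 (char_poly_monic _).
rewrite natrD (IH m mn g' g'inj) /ocnt (bigID (fun y => y \in S)) /=.
congr (_ + _).
  rewrite (eq_bigr (fun=> (k%:R)^-1)); last first.
    move=> y yS; have -> // : [set z | fconnect g y z] = S.
    by apply/eqP; rewrite class_eq //; rewrite inE in yS.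
  rewrite sumr_const -[RHS]mulr_natr.
  by rewrite mulVf // pnatr_eq0 gtn_eqF.
symmetry; rewrite (eq_bigl (fun i => i \in ~: S)); last by move=> i; rewrite in_setC.
rewrite big_enum_val; apply: eq_bigr => b _.
have -> : [set y | fconnect g (enum_val b) y] = ev @: [set y | fconnect g' b y].
  apply/setP => y; rewrite inE; apply/idP/imsetP.
  - move=> h; have yS : y \in ~: S.
      rewrite inE; apply: contra (evS b); rewrite !inE => xy.
      by apply: connect_trans xy _; rewrite fconnect_sym.
    exists (enum_rank_in (enum_valP b) y).
      by rewrite inE -(iter_findex h) -F4 /ev enum_valK_in fconnect_iter.
    by rewrite /ev enum_rankK_in.
  - case=> b' hb' ->; rewrite inE in hb'.
    by rewrite -(iter_findex hb') F4 fconnect_iter.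
by rewrite card_imset //; exact: enum_val_inj.
Qed.

End RingPart.

Section G.
Variables (r : nat) (p q : nat -> nat).

Lemma val_step (x : 'I_(lorenz_n r p q)) : val (@closure_step r p q x) = lorenz_strand r p q x.
Proof. by rewrite /closure_step val_insubd strand_lt. Qed.

Lemma step_inj : injective (@closure_step r p q).
Proof.
move=> x1 x2 /(congr1 val); rewrite !val_step => /strand_inj h.
by apply: val_inj; apply: h.
Qed.

Lemma M_pmx : lorenz_M r p q = pmx (@closure_step r p q).
Proof.
apply/matrixP => i j; rewrite !mxE.
have [[l0 [k0 [lr0 kl0 ei]]]|[l0 [k0 [lr0 kl0 ei]]]] := decomp (ltn_ord i).
- have hg : val (@closure_step r p q i) = bot_qstart p q l0 + k0 by rewrite val_step ei strandQ.
  have hQ := D_mono q lr0; rewrite (D_S q) in hQ.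
  case: existsP => [[l /orP hl]|hn].
    have lr := ltn_ord l.
    suff -> : j = @closure_step r p q i by rewrite eqxx.
    apply: val_inj; rewrite hg.
    rewrite /row_qstart /row_pstart /Qsum /Psum in hl ei hQ.
    case: hl => /andP [/andP [h1 h2] /eqP hj].
      have := @D_uniq q l l0 (i - \sum_(m < l) q m) k0.
      case; [lia | done | lia | ] => el ek; by rewrite -[val j]/(nat_of_ord j) hj -el ek.
    lia.
  case: eqP => // /(congr1 val); rewrite hg => hj; exfalso; apply: hn.
  exists (Ordinal lr0); apply/orP; left.
  rewrite /row_qstart /Qsum /= in ei *; rewrite hj; apply/andP; split; [apply/andP; split|]; try lia.
- have hg : val (@closure_step r p q i) = bot_pstart p q l0 + k0 by rewrite val_step ei strandP.
  case: existsP => [[l /orP hl]|hn].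
    have lr := ltn_ord l.
    have hQ := D_mono q lr; rewrite (D_S q) in hQ.
    suff -> : j = @closure_step r p q i by rewrite eqxx.
    apply: val_inj; rewrite hg.
    rewrite /row_qstart /row_pstart /Qsum /Psum in hl ei hQ.
    case: hl => /andP [/andP [h1 h2] /eqP hj].
      lia.
    have := @D_uniq p l l0 (i - (\sum_(m < r) q m + \sum_(m < l) p m)) k0.
    case; [lia | done | lia | ] => el ek; by rewrite -[val j]/(nat_of_ord j) hj -el ek.
  case: eqP => // /(congr1 val); rewrite hg => hj; exfalso; apply: hn.
  exists (Ordinal lr0); apply/orP; right.
  rewrite /row_pstart /Qsum /Psum /= in ei *; rewrite hj; apply/andP; split; [apply/andP; split|]; try lia.
Qed.
End G.

End LorenzAux.
Import LorenzAux.

Theorem corollary6p11 (r : nat) (p q : nat -> nat) :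
  (1 <= r)%N ->
  (forall i, (i < r)%N -> (0 < p i)%N /\ (0 < q i)%N) ->
  lorenz_link_components r p q = mup (1 : rat) (char_poly (lorenz_M r p q)).
Proof.
move=> _ _; apply/eqP; rewrite -(eqr_nat rat) M_pmx main_ind; last exact: step_inj.
by rewrite /lorenz_link_components card_orbits //; exact: step_inj.
Qed.
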